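(* Let $X=\{1,\dots,n\}$, $Y$ finite, $Q$ a symmetric irreducible stochastic matrix on $Y$ (notation in context). Let $0\le k\le h\le n-1$ and let $\underline a=(a_0,\dots,a_m)$ be a type with $a_0+\cdots+a_m=h+1$ and $\ell(\underline a)\le k$; put $\underline a'=(a_0-1,a_1,\dots,a_m)$. Then every $F\in P_{h,\underline a',k}$ satisfies $$D_{h+1,\underline a}D^*_{h+1,\underline a}F=|Y|\,(n+\ell(\underline a)-k-h)(h-k+1)\,F.$$
   Context: $Q$ acts on $L(Y)$ by $(Qf)(y)=\sum_{y'}q(y,y')f(y')$, with distinct eigenvalues $\lambda_0=1,\dots,\lambda_m$ and eigenspaces $W_0$ (constants), $W_1,\dots,W_m$. For $0\le k\le n$, $\Theta_k$ is the set of functions $\theta$ with $\mathrm{dom}(\theta)$ a $k$-subset of $X$ and values in $Y$ ($\Theta_0$ consists of the empty function); $\varphi\subseteq\theta$ means $\mathrm{dom}\varphi\subseteq\mathrm{dom}\theta$ and $\theta|_{\mathrm{dom}\varphi}=\varphi$. For $1\le k\le n$: $D_k:L(\Theta_k)\to L(\Theta_{k-1})$, $(D_kF)(\varphi)=\sum_{\theta\in\Theta_k:\theta\supseteq\varphi}F(\theta)$, and $D_k^*:L(\Theta_{k-1})\to L(\Theta_k)$, $(D_k^*F)(\theta)=\sum_{\varphi\subseteq\theta}F(\varphi)$; $D_0:=0$. Types $\underline b=(b_0,\dots,b_m)$ of nonnegative integers, $|\underline b|=\sum b_i$, $\ell(\underline b)=b_1+\cdots+b_m$, $\underline b'=(b_0-1,b_1,\dots,b_m)$.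 A fundamental function of type $\underline b$ on a set $A$ with $|A|=|\underline b|$ is $F=\bigotimes_{j\in A}F^j$ ($F(\theta)=\prod_{j\in A}F^j(\theta(j))$ on $Y^A$, $0$ elsewhere) with each $F^j$ in some $W_{i_j}$ and exactly $b_i$ indices with $i_j=i$; $P_{k,\underline b,A}$ is their span and $P_{k,\underline b}=\bigoplus_{|A|=k}P_{k,\underline b,A}$ (so $P_{0,(0,\dots,0)}=L(\Theta_0)$; $\{0\}$ if an entry is negative). $D_{k,\underline b}$ is $D_k$ restricted to $P_{k,\underline b}$ and $D^*_{k,\underline b}$ is $D^*_k$ restricted to $P_{k-1,\underline b'}$. Spaces $P_{h,\underline b,k}$: for a type $\underline b$ with $|\underline b|=k$, $P_{k,\underline b,k}=\ker D_{k,\underline b}$; for $k<h\le n$ and $|\underline b|=h$ with $\ell(\underline b)\le k$, $P_{h,\underline b,k}=D^*_{h,\underline b}(P_{h-1,\underline b',k})$. *)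

(* Defs.v *)
From HB Require Import structures.
From mathcomp Require Import all_boot all_order all_algebra.
Set Implicit Arguments. Unset Strict Implicit. Unset Printing Implicit Defensive.
Import Order.TTheory GRing.Theory Num.Theory.
Local Open Scope ring_scope.

(* Scalars: an arbitrary numClosedFieldType C (e.g. the complex numbers);
   X = 'I_n, Y a finite type.  A partial function theta from X to Y is an
   element of {ffun 'I_n -> option Y}; dom theta = {j | theta j <> None}.
   L(Theta_k) is embedded in {ffun pfun -> C} as the functions supported on
   partial functions with domain of size k. *)

Definition pfun (n : nat) (Y : finType) := {ffun 'I_n -> option Y}.

Definition dom (n : nat) (Y : finType) (th : pfun n Y) : {set 'I_n} :=
  [set j | th j != None].

Definition psub (n : nat) (Y : finType) (phi th : pfun n Y) : bool :=
  [forall j, (phi j != None) ==> (th j == phi j)].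

Definition Dop (C : numClosedFieldType) (n : nat) (Y : finType) (k : nat)
  (F : {ffun pfun n Y -> C}) : {ffun pfun n Y -> C} :=
  [ffun phi => if (k == 0%N) || (#|dom phi| != k.-1) then 0
               else \sum_(th : pfun n Y | (#|dom th| == k) && psub phi th) F th].

Definition Dstar (C : numClosedFieldType) (n : nat) (Y : finType) (k : nat)
  (F : {ffun pfun n Y -> C}) : {ffun pfun n Y -> C} :=
  [ffun th => if (k == 0%N) || (#|dom th| != k) then 0
              else \sum_(phi : pfun n Y | (#|dom phi| == k.-1) && psub phi th) F phi].

Fixpoint qpow (C : numClosedFieldType) (Y : finType) (q : Y -> Y -> C) (t : nat)
  : Y -> Y -> C :=
  match t with
  | 0 => fun y y' => if y == y' then 1 else 0
  | t'.+1 => fun y y' => \sum_(z : Y) qpow q t' y z * q z y'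
  end.

Definition symmetric_stochastic_irreducible (C : numClosedFieldType) (Y : finType)
  (q : Y -> Y -> C) : Prop :=
  [/\ forall y y', q y y' = q y' y,
      forall y y', 0 <= q y y',
      forall y, \sum_(y' : Y) q y y' = 1
    & forall y y', exists t, 0 < qpow q t y y'].

Definition Qop (C : numClosedFieldType) (Y : finType) (q : Y -> Y -> C)
  (f : Y -> C) : Y -> C := fun y => \sum_(y' : Y) q y y' * f y'.

Definition eigen_enumeration (C : numClosedFieldType) (Y : finType)
  (q : Y -> Y -> C) (m : nat) (lam : 'I_m.+1 -> C) : Prop :=
  [/\ lam ord0 = 1,
      injective lam,
      forall i, exists f : Y -> C, (exists y, f y != 0) /\ Qop q f =1 (fun y => lam i * f y)
    & forall (mu : C) (f : Y -> C), (exists y, f y != 0) ->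
        Qop q f =1 (fun y => mu * f y) -> exists i, mu = lam i].

Definition inW (C : numClosedFieldType) (Y : finType) (q : Y -> Y -> C) (m : nat)
  (lam : 'I_m.+1 -> C) (i : 'I_m.+1) (f : Y -> C) : Prop :=
  Qop q f =1 (fun y => lam i * f y).

Definition type_size (m : nat) (b : 'I_m.+1 -> nat) : nat := \sum_(i < m.+1) b i.
Definition type_len (m : nat) (b : 'I_m.+1 -> nat) : nat :=
  \sum_(i < m.+1 | i != ord0) b i.
(* b' = (b_0 - 1, b_1, ..., b_m); only used where b_0 >= 1 *)
Definition type_prime (m : nat) (b : 'I_m.+1 -> nat) : 'I_m.+1 -> nat :=
  fun i => if i == ord0 then (b i).-1 else b i.

Definition isFund (C : numClosedFieldType) (n : nat) (Y : finType)
  (q : Y -> Y -> C) (m : nat) (lam : 'I_m.+1 -> C) (b : 'I_m.+1 -> nat)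
  (A : {set 'I_n}) (F : {ffun pfun n Y -> C}) : Prop :=
  exists (idx : 'I_n -> 'I_m.+1) (f : 'I_n -> Y -> C),
    [/\ forall j, j \in A -> inW q lam (idx j) (f j),
        forall i, #|[set j in A | idx j == i]| = b i
      & F = [ffun th : pfun n Y =>
               if dom th == A then
                 \prod_(j in A) (match th j with Some y => f j y | None => 0 end)
               else 0]].

Definition PkbA (C : numClosedFieldType) (n : nat) (Y : finType)
  (q : Y -> Y -> C) (m : nat) (lam : 'I_m.+1 -> C) (b : 'I_m.+1 -> nat)
  (A : {set 'I_n}) (F : {ffun pfun n Y -> C}) : Prop :=
  exists (r : nat) (c : 'I_r -> C) (G : 'I_r -> {ffun pfun n Y -> C}),
    (forall s, isFund q lam b A (G s)) /\
    F = [ffun th => \sum_(s < r) c s * G s th].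

Definition Pkb (C : numClosedFieldType) (n : nat) (Y : finType)
  (q : Y -> Y -> C) (m : nat) (lam : 'I_m.+1 -> C) (k : nat) (b : 'I_m.+1 -> nat)
  (F : {ffun pfun n Y -> C}) : Prop :=
  exists G : {set 'I_n} -> {ffun pfun n Y -> C},
    (forall A : {set 'I_n}, #|A| = k -> PkbA q lam b A (G A)) /\
    F = [ffun th => \sum_(A : {set 'I_n} | #|A| == k) G A th].

Fixpoint Phbk (C : numClosedFieldType) (n : nat) (Y : finType)
  (q : Y -> Y -> C) (m : nat) (lam : 'I_m.+1 -> C) (k h : nat)
  (b : 'I_m.+1 -> nat) (F : {ffun pfun n Y -> C}) {struct h} : Prop :=
  if h == k then
    [/\ type_size b = k, Pkb q lam k b F & Dop k F = 0]
  else
    match h with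
    | 0 => False
    | h'.+1 =>
        [/\ (k < h)%N, type_size b = h, (type_len b <= k)%N &
          exists G, Phbk q lam k h' (type_prime b) G /\ F = Dstar h G]
    end.

(* Main.v *)
Require Import Defs.
From HB Require Import structures.
From mathcomp Require Import all_boot all_order all_algebra.
From mathcomp Require Import ring.
Set Implicit Arguments. Unset Strict Implicit. Unset Printing Implicit Defensive.
Import Order.TTheory GRing.Theory Num.Theory.
Local Open Scope ring_scope.


Definition upd (n : nat) (Y : finType) (th : pfun n Y) (j : 'I_n) (o : option Y)
  : pfun n Y := [ffun x => if x == j then o else th x].

Lemma updE n Y (th : pfun n Y) j o x : upd th j o x = if x == j then o else th x.
Proof. by rewrite ffunE. Qed.

Lemma in_dom n Y (th : pfun n Y) x : (x \in dom th) = (th x != None).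
Proof. by rewrite inE. Qed.

Lemma dom_updS n Y (th : pfun n Y) j y : dom (upd th j (Some y)) = j |: dom th.
Proof. by apply/setP=> x; rewrite !inE ffunE; case: (x =P _). Qed.

Lemma dom_updN n Y (th : pfun n Y) j : dom (upd th j None) = dom th :\ j.
Proof. by apply/setP=> x; rewrite !inE ffunE; case: (x =P _). Qed.

Lemma upd_upd_same n Y (th : pfun n Y) j o o' : upd (upd th j o) j o' = upd th j o'.
Proof. by apply/ffunP=> x; rewrite !ffunE; case: (x =P _). Qed.

Lemma upd_comm n Y (th : pfun n Y) i j o o' : i != j ->
  upd (upd th i o) j o' = upd (upd th j o') i o.
Proof.
move=> ij; apply/ffunP=> x; rewrite !ffunE.
case: (x =P j) => [->|//]; by rewrite eq_sym (negbTE ij).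
Qed.

Lemma upd_id n Y (th : pfun n Y) j o : th j = o -> upd th j o = th.
Proof. by move=> E; apply/ffunP=> x; rewrite !ffunE; case: (x =P _) => // ->. Qed.

Lemma psub_dom n Y (phi th : pfun n Y) : psub phi th -> dom phi \subset dom th.
Proof.
move=> /forallP H; apply/subsetP=> x; rewrite !inE => Hx.
by move: (H x); rewrite Hx /= => /eqP ->.
Qed.

Lemma psub_updN n Y (th : pfun n Y) j : psub (upd th j None) th.
Proof.
apply/forallP=> x; apply/implyP; rewrite ffunE; by case: (x =P _).
Qed.

Lemma psub_updS n Y (phi : pfun n Y) i y : phi i = None -> psub phi (upd phi i (Some y)).
Proof.
move=> Hi; apply/forallP=> x; apply/implyP; rewrite ffunE.
by case: (x =P i) => [->|//]; rewrite Hi.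
Qed.

Lemma psub_step n Y (phi th : pfun n Y) : psub phi th ->
  #|dom th| = (#|dom phi|).+1 ->
  exists i y, [/\ phi i = None, th i = Some y, th = upd phi i (Some y)
     & phi = upd th i None].
Proof.
move=> Hs Hc; have Hsub := psub_dom Hs.
have : #|dom th :\: dom phi| == 1%N.
  by rewrite cardsD (setIidPr Hsub) Hc subSn // subnn.
case/cards1P=> i Hi.
have iD : i \in dom th :\: dom phi by rewrite Hi set11.
move: (iD); rewrite !inE negbK => /andP[/eqP phii thi].
case E : (th i) thi => [y|//] _.
have other : forall x, x != i -> th x = phi x.
  move=> x xi; case Px : (phi x) => [z|].
    move/forallP: Hs => /(_ x); rewrite Px /= => /eqP ->; done.
  apply/eqP; apply: contraR xi => thx.
  have : x \in dom th :\: dom phi by rewrite !inE Px thx.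
  by rewrite Hi inE.
exists i, y; split => //.
  apply/ffunP=> x; rewrite ffunE; case: (x =P i) => [->//|/eqP]; exact: other.
apply/ffunP=> x; rewrite ffunE; case: (x =P i) => [->//|/eqP xi].
by rewrite other.
Qed.

Lemma sum_sub (C : numClosedFieldType) n Y (F : pfun n Y -> C) th s :
  #|dom th| = s.+1 ->
  \sum_(psi : pfun n Y | (#|dom psi| == s) && psub psi th) F psi
  = \sum_(j in dom th) F (upd th j None).
Proof.
move=> Hc.
rewrite -(big_imset _ (h := fun j => upd th j None)); last first.
  move=> j j' jD j'D /ffunP /(_ j); rewrite !ffunE eqxx.
  case: (j =P j') => // _ E; move: jD; by rewrite inE -E.
apply: eq_bigl => psi; apply/andP/imsetP.
  case=> /eqP Hp Hs; have [i [y [Hpi Hti _ ->]]] := psub_step Hs (etrans Hc (congr1 S (esym Hp))).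
  by exists i => //; rewrite inE Hti.
case=> j jD ->; split; last exact: psub_updN.
by rewrite dom_updN; move: Hc; rewrite (cardsD1 j) jD add1n => -[->].
Qed.

Lemma sum_sup (C : numClosedFieldType) n Y (F : pfun n Y -> C) phi s :
  #|dom phi| = s ->
  \sum_(th : pfun n Y | (#|dom th| == s.+1) && psub phi th) F th
  = \sum_(i in ~: dom phi) \sum_(y : Y) F (upd phi i (Some y)).
Proof.
move=> Hc.
rewrite pair_big_dep /=.
rewrite (eq_bigl (mem [set p : 'I_n * Y | p.1 \in ~: dom phi])); last first.
  by move=> p; rewrite !inE andbT.
rewrite -(big_imset _ (h := fun p : 'I_n * Y => upd phi p.1 (Some p.2))); last first.
  move=> [i y] [i' y']; rewrite !inE /= !negbK => /eqP Hi /eqP Hi' /ffunP /(_ i).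
  rewrite !ffunE eqxx; case: (i =P i') => [<- [->]//|_]; by rewrite Hi.
apply: eq_bigl => th; apply/andP/imsetP.
  case=> /eqP Hth Hs; rewrite -Hc in Hth.
  have [i [y [Hpi _ -> _]]] := psub_step Hs Hth.
  by exists (i, y) => //; rewrite !inE negbK Hpi.
case=> [[i y]]; rewrite !inE negbK /= => /eqP Hi ->; split; last exact: psub_updS.
by rewrite dom_updS cardsU1 inE negbK Hi Hc.
Qed.


Definition supp (C : numClosedFieldType) n (Y : finType) h (F : {ffun pfun n Y -> C}) :=
  forall th, #|dom th| != h -> F th = 0.

Definition Rprop (C : numClosedFieldType) n (Y : finType) h (c : C)
  (F : {ffun pfun n Y -> C}) :=
  forall phi : pfun n Y, #|dom phi| = h ->
  \sum_(j in dom phi) \sum_(y : Y) F (upd phi j (Some y)) = c * F phi.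

Lemma setU1_in (T : finType) (j : T) (A : {set T}) : j \in A -> j |: A = A.
Proof. by move=> jA; apply/setP=> x; rewrite !inE; case: (x =P j) => // ->. Qed.

Lemma exch_D (C : numClosedFieldType) n (D : {set 'I_n}) (f : 'I_n -> 'I_n -> C) :
  \sum_(j in D) \sum_(i in D :\ j) f j i = \sum_(i in D) \sum_(j in D :\ i) f j i.
Proof.
rewrite (exchange_big_dep (mem D)) /=; last by move=> j i _; rewrite !inE => /andP[].
apply: eq_bigr => i iD; apply: eq_bigl => j; rewrite !inE iD andbT eq_sym andbC //.
Qed.

Lemma Dstar_supp (C : numClosedFieldType) n (Y : finType) h (G : {ffun pfun n Y -> C}) :
  supp h.+1 (Dstar h.+1 G).
Proof. by move=> th Hth; rewrite ffunE Hth orbT. Qed.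

Lemma DstarE (C : numClosedFieldType) n (Y : finType) h (G : {ffun pfun n Y -> C}) th :
  #|dom th| = h.+1 -> Dstar h.+1 G th = \sum_(j in dom th) G (upd th j None).
Proof. by move=> Hc; rewrite ffunE Hc eqxx /=; apply: sum_sub. Qed.

Lemma DopE (C : numClosedFieldType) n (Y : finType) h (F : {ffun pfun n Y -> C}) phi :
  #|dom phi| = h ->
  Dop h.+1 F phi = \sum_(i in ~: dom phi) \sum_(y : Y) F (upd phi i (Some y)).
Proof. by move=> Hc; rewrite ffunE Hc eqxx /=; apply: sum_sup. Qed.

Lemma Rprop_Dstar (C : numClosedFieldType) n (Y : finType) s (c : C)
  (G : {ffun pfun n Y -> C}) :
  Rprop s c G -> Rprop s.+1 (c + #|Y|%:R) (Dstar s.+1 G).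
Proof.
move=> HR th Hth.
transitivity (\sum_(j in dom th) \sum_(y : Y)
   (G (upd th j None) + \sum_(i in dom th :\ j) G (upd (upd th i None) j (Some y)))).
  apply: eq_bigr => j jD; apply: eq_bigr => y _.
  rewrite DstarE; last by rewrite dom_updS setU1_in.
  rewrite dom_updS setU1_in // (big_setD1 j jD) upd_upd_same; congr (_ + _).
  apply: eq_bigr => i; rewrite !inE => /andP[ij _].
  have ji : j != i by rewrite eq_sym.
  by rewrite upd_comm.
under eq_bigr => j _ do rewrite big_split /= sumr_const exchange_big /=.
rewrite big_split /= exch_D.
rewrite [X in _ + X](eq_bigr (fun i => c * G (upd th i None))); last first.
  move=> i iD; rewrite -dom_updN; apply: HR; rewrite dom_updN; move: Hth; rewrite (cardsD1 i) iD add1n.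
  by case.
by rewrite -mulr_sumr sumrMnl DstarE // mulrDl addrC mulr_natl.
Qed.


Lemma DDstar (C : numClosedFieldType) n (Y : finType) h (c : C)
  (F : {ffun pfun n Y -> C}) :
  supp h F -> Rprop h c F ->
  Dop h.+1 (Dstar h.+1 F) =
  [ffun phi => Dstar h (Dop h F) phi + ((n - h)%:R * #|Y|%:R - c) * F phi].
Proof.
move=> HS HR; apply/ffunP => phi; rewrite [RHS]ffunE.
case: (#|dom phi| =P h) => Hc; last first.
  rewrite HS; last by apply/eqP.
  rewrite mulr0 addr0 !ffunE /=.
  have -> : (#|dom phi| != h) = true by apply/eqP.
  by rewrite orbT.
pose X := \sum_(i in ~: dom phi) \sum_(y : Y) \sum_(j in dom phi)
            F (upd (upd phi j None) i (Some y)).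
have HL : Dop h.+1 (Dstar h.+1 F) phi = F phi *+ #|Y| *+ (n - h) + X.
  rewrite DopE //.
  have Hn : #|~: dom phi| = (n - h)%N by rewrite -Hc cardsCs setCK card_ord.
  have E1 : F phi *+ #|Y| *+ #|~: dom phi| = \sum_(i in ~: dom phi) \sum_(y : Y) F phi.
    by rewrite sumr_const; congr (_ *+ _); rewrite sumr_const.
  rewrite -Hn E1 /X -big_split /=; apply: eq_bigr => i.
  rewrite inE in_dom negbK => /eqP Hi.
  rewrite -big_split /=; apply: eq_bigr => y _.
  rewrite DstarE; last by rewrite dom_updS cardsU1 in_dom Hi Hc.
  rewrite dom_updS big_setU1 ?in_dom ?Hi //= upd_upd_same upd_id //.
  congr (_ + _); apply: eq_bigr => j jD.
  rewrite upd_comm //; apply/eqP => E; move: jD; by rewrite -E in_dom Hi.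
have HR' : Dstar h (Dop h F) phi = c * F phi + X.
  destruct h as [|h].
    have D0 : dom phi = set0 by apply: cards0_eq.
    rewrite ffunE eqxx /= -(HR phi Hc) /X D0 !big_set0 add0r.
    by rewrite big1 // => i _; rewrite big1 // => y _; rewrite big_set0.
  have EX : X = \sum_(j in dom phi) \sum_(i in ~: dom phi) \sum_(y : Y)
      F (upd (upd phi j None) i (Some y)).
    rewrite /X; under eq_bigr => i _ do rewrite exchange_big /=.
    exact: exchange_big.
  rewrite DstarE // -(HR phi Hc) EX -big_split /=.
  apply: eq_bigr => j jD.
  rewrite DopE; last by rewrite dom_updN; move: Hc; rewrite (cardsD1 j) jD add1n; case.
  have -> : ~: dom (upd phi j None) = j |: ~: dom phi.
    by apply/setP=> x; rewrite dom_updN !inE negb_and negbK orbC.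
  rewrite big_setU1; last by rewrite inE negbK.
  by congr (_ + _); apply: eq_bigr => y _; rewrite upd_upd_same.
rewrite HL HR'; clearbody X.
move: (F phi) (#|Y|) (n - h)%N => f y t.
rewrite mulrBl addrAC (addrC (c * f)) subrK.
by rewrite -mulrA !mulr_natl.
Qed.


Lemma colsum (C : numClosedFieldType) (Y : finType) (q : Y -> Y -> C) y' :
  symmetric_stochastic_irreducible q -> \sum_(y : Y) q y y' = 1.
Proof.
case=> Hs _ Hr _; rewrite -(Hr y'); apply: eq_bigr => y _; exact: Hs.
Qed.

Lemma sum_Qop (C : numClosedFieldType) (Y : finType) (q : Y -> Y -> C) f :
  symmetric_stochastic_irreducible q -> \sum_(y : Y) Qop q f y = \sum_(y : Y) f y.
Proof.
move=> H; rewrite /Qop exchange_big /=; apply: eq_bigr => y' _.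
by rewrite -mulr_suml colsum // mul1r.
Qed.

Lemma sum_eig0 (C : numClosedFieldType) (Y : finType) (q : Y -> Y -> C) f (mu : C) :
  symmetric_stochastic_irreducible q -> Qop q f =1 (fun y => mu * f y) -> mu != 1 ->
  \sum_(y : Y) f y = 0.
Proof.
move=> H Hf Hmu; have := sum_Qop f H.
rewrite (eq_bigr _ (fun y _ => Hf y)) -mulr_sumr => /eqP.
rewrite -subr_eq0 -{2}(mul1r (\sum_y f y)) -mulrBl mulf_eq0 subr_eq0 (negbTE Hmu) /=.
by move/eqP.
Qed.

Lemma harm_edge (C : numClosedFieldType) (Y : finType) (q : Y -> Y -> C) f :
  symmetric_stochastic_irreducible q -> Qop q f =1 f ->
  forall y y', q y y' != 0 -> f y = f y'.
Proof.
move=> H Hf.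
have [Hs Hp Hr _] := H.
pose g y := f y * (f y)^*.
have E : forall y, \sum_(y' : Y) q y y' * ((f y - f y') * (f y - f y')^*)
    = - g y + \sum_(y' : Y) q y y' * g y'.
  move=> y.
  have Hc : \sum_(y' : Y) q y y' * (f y')^* = (f y)^*.
    rewrite -(Hf y) /Qop rmorph_sum; apply: eq_bigr => y' _.
    by rewrite rmorphM /= (geC0_conj (Hp y y')).
  have Hq : \sum_(y' : Y) q y y' * f y' = f y by rewrite -(Hf y).
  transitivity (\sum_(y' : Y) (g y * q y y' - f y * (q y y' * (f y')^*)
      - (f y)^* * (q y y' * f y') + q y y' * g y')).
    apply: eq_bigr => y' _; rewrite /g rmorphB /=; ring.
  rewrite !big_split /= !sumrN -!mulr_sumr Hr Hc Hq /g; ring.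
have Z : \sum_(y : Y) \sum_(y' : Y) q y y' * ((f y - f y') * (f y - f y')^*) = 0.
  rewrite (eq_bigr _ (fun y _ => E y)) big_split /= sumrN exchange_big /=.
  under [X in _ + X]eq_bigr => y' _ do rewrite -mulr_suml colsum // mul1r.
  by rewrite addNr.
have P0 : forall y y', 0 <= q y y' * ((f y - f y') * (f y - f y')^*).
  by move=> y y'; rewrite mulr_ge0 ?mul_conjC_ge0.
move=> y y' Hq.
have Z2 : \sum_(y'0 : Y) q y y'0 * ((f y - f y'0) * (f y - f y'0)^*) = 0.
  apply: (psumr_eq0P _ Z) => // z _; apply: sumr_ge0 => w _; exact: P0.
have := psumr_eq0P (fun w _ => P0 y w) Z2 => /(_ y' isT).
move/eqP; rewrite mulf_eq0 (negbTE Hq) /= mul_conjC_eq0 subr_eq0.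
by move/eqP.
Qed.

Lemma harm_const (C : numClosedFieldType) (Y : finType) (q : Y -> Y -> C) f :
  symmetric_stochastic_irreducible q -> Qop q f =1 f ->
  forall y y', f y = f y'.
Proof.
move=> H Hf y y'.
have [_ Hp _ Hirr] := H.
have [t Ht] := Hirr y y'.
have : qpow q t y y' != 0 by rewrite gt_eqF.
elim: t y' {Ht} => [|t IH] y' /=.
  by case: (y =P y') => [->|]; rewrite ?eqxx.
move=> Hn.
case: (pickP (fun z => qpow q t y z * q z y' != 0)) => [z Hz|H0].
  move: Hz; rewrite mulf_eq0 negb_or => /andP[H1 H2].
  by rewrite (IH z H1); apply: (harm_edge H Hf).
move: Hn; rewrite big1 ?eqxx // => z _; apply/eqP; move: (H0 z) => /= /negbFE //.
Qed.


Lemma lin_gen (C : numClosedFieldType) n (Y : finType) k (c0 : C) (I : finType)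
  (P : pred I) (w : I -> C) (G : I -> {ffun pfun n Y -> C}) :
  (forall i, P i -> supp k (G i) /\ Rprop k c0 (G i)) ->
  supp k [ffun th => \sum_(i | P i) w i * G i th] /\
  Rprop k c0 [ffun th => \sum_(i | P i) w i * G i th].
Proof.
move=> HG; split.
  move=> th Hth; rewrite ffunE big1 // => i Pi.
  by have [HS _] := HG i Pi; rewrite HS ?mulr0.
move=> phi Hphi; rewrite ffunE mulr_sumr.
under eq_bigr => j _ do under eq_bigr => y _ do rewrite ffunE.
under eq_bigr => j _ do rewrite exchange_big /=.
rewrite exchange_big /=; apply: eq_bigr => i Pi.
have [_ HR] := HG i Pi.
under eq_bigr => j _ do rewrite -mulr_sumr.
by rewrite -mulr_sumr HR // mulrCA.
Qed.


Lemma fund_props (C : numClosedFieldType) n (Y : finType) (q : Y -> Y -> C) m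
  (lam : 'I_m.+1 -> C) (b : 'I_m.+1 -> nat) (A : {set 'I_n}) F :
  symmetric_stochastic_irreducible q -> eigen_enumeration q lam ->
  isFund q lam b A F ->
  supp #|A| F /\ Rprop #|A| (#|Y|%:R * (b ord0)%:R) F.
Proof.
move=> Hq [Hl0 Hinj _ _] [idx [f [Hin Hcnt ->]]].
pose g j (o : option Y) := match o with Some y => f j y | None => 0 end.
split.
  move=> th Hth; rewrite ffunE; case: (dom th =P A) => // E.
  by move: Hth; rewrite E eqxx.
move=> phi Hphi.
have Edom : forall j y, j \in dom phi -> dom (upd phi j (Some y)) = dom phi.
  by move=> j y jD; rewrite dom_updS setU1_in.
case: (dom phi =P A) => EA; last first.
  rewrite ffunE; have -> : (dom phi == A) = false by apply/eqP.
  rewrite mulr0 big1 // => j jD; rewrite big1 // => y _.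
  by rewrite ffunE Edom //; have -> : (dom phi == A) = false by apply/eqP.
rewrite ffunE EA eqxx.
pose Pphi := \prod_(j0 in A) g j0 (phi j0).
have key : forall j, j \in A -> \sum_(y : Y) [ffun th => if dom th == A
   then \prod_(j0 in A) match th j0 with Some y0 => f j0 y0 | None => 0 end
   else 0] (upd phi j (Some y)) = (if idx j == ord0 then #|Y|%:R * Pphi else 0).
  move=> j jA.
  have jD : j \in dom phi by rewrite EA.
  have [y0 Ephi] : exists y0, phi j = Some y0.
    by move: jD; rewrite in_dom; case: (phi j) => [y0|//]; exists y0.
  pose R := \prod_(j0 in A :\ j) g j0 (phi j0).
  have Ey : forall y, [ffun th => if dom th == A
     then \prod_(j0 in A) match th j0 with Some y0 => f j0 y0 | None => 0 end
     else 0] (upd phi j (Some y)) = f j y * R.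
    move=> y; rewrite ffunE Edom // EA eqxx (big_setD1 j jA) /= ffunE eqxx.
    congr (_ * _); apply: eq_bigr => j0; rewrite !inE => /andP[j0j _].
    by rewrite ffunE (negbTE j0j).
  have EP : Pphi = f j y0 * R by rewrite /Pphi (big_setD1 j jA) /= Ephi.
  rewrite (eq_bigr _ (fun y _ => Ey y)) -mulr_suml EP.
  case: (idx j =P ord0) => Hi.
    have Hc := harm_const Hq (f := f j).
    have Hc' : forall y, f j y = f j y0.
      move=> y; apply: Hc => z; rewrite (Hin j jA z) Hi Hl0 mul1r //.
    rewrite (eq_bigr (fun _ => f j y0)) ?sumr_const; last by move=> y _; exact: Hc'.
    by rewrite mulrA mulr_natl; reflexivity.
  have Hne : lam (idx j) != 1.
    by apply/eqP => E; apply: Hi; apply: Hinj; rewrite E Hl0.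
  by rewrite (sum_eig0 Hq (Hin j jA) Hne) mul0r.
rewrite (eq_bigr _ key) -big_mkcondr /=.
rewrite (eq_bigl (mem [set j in A | idx j == ord0])); last by move=> j; rewrite !inE.
rewrite sumr_const Hcnt -mulr_natr /Pphi.
rewrite -[_ *+ b ord0]mulr_natr mulrAC; reflexivity.
Qed.


Lemma ffun0_app (C : numClosedFieldType) (T : finType) (x : T) :
  (0 : {ffun T -> C}) x = 0.
Proof. by rewrite ffunE. Qed.

Lemma pkb_props (C : numClosedFieldType) (n : nat) (Y : finType) (q : Y -> Y -> C) m
  (lam : 'I_m.+1 -> C) k (b : 'I_m.+1 -> nat) (F : {ffun pfun n Y -> C}) :
  symmetric_stochastic_irreducible q -> eigen_enumeration q lam ->
  Pkb q lam k b F -> supp k F /\ Rprop k (#|Y|%:R * (b ord0)%:R) F.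
Proof.
move=> Hq He [G [HG ->]].
have -> : [ffun th => \sum_(A : {set 'I_n} | #|A| == k) G A th] =
          [ffun th => \sum_(A : {set 'I_n} | #|A| == k) 1 * G A th].
  by apply/ffunP => th; rewrite !ffunE; apply: eq_bigr => A _; rewrite mul1r.
apply: lin_gen => A /eqP HA.
have [r [c [Gs [HGs ->]]]] := HG A HA.
apply: (@lin_gen _ _ _ _ _ _ xpredT) => s _.
rewrite -HA; exact: (fund_props Hq He (HGs s)).
Qed.

Lemma type_split m (b : 'I_m.+1 -> nat) : type_size b = (b ord0 + type_len b)%N.
Proof. by rewrite /type_size /type_len (bigD1 ord0). Qed.

Lemma type_len_prime m (b : 'I_m.+1 -> nat) : type_len (type_prime b) = type_len b.
Proof. by apply: eq_bigr => i /negbTE Hi; rewrite /type_prime Hi. Qed.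

Lemma Dstar_scale (C : numClosedFieldType) (n : nat) (Y : finType) h (a : C)
  (G : {ffun pfun n Y -> C}) :
  Dstar h [ffun x => a * G x] = [ffun x => a * Dstar h G x].
Proof.
apply/ffunP => th; rewrite !ffunE; case: ifP => _; first by rewrite mulr0.
rewrite mulr_sumr; apply: eq_bigr => psi _; by rewrite ffunE.
Qed.

Lemma Phbk_eq (C : numClosedFieldType) (n : nat) (Y : finType) (q : Y -> Y -> C) m
  (lam : 'I_m.+1 -> C) k h (b : 'I_m.+1 -> nat) (F : {ffun pfun n Y -> C}) :
  Phbk q lam k h b F =
  if h == k then [/\ type_size b = k, Pkb q lam k b F & Dop k F = 0]
  else match h with
    | 0 => False
    | h'.+1 => [/\ (k < h)%N, type_size b = h, (type_len b <= k)%N &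
          exists G, Phbk q lam k h' (type_prime b) G /\ F = Dstar h G]
    end.
Proof. by case: h. Qed.


Lemma base_case (C : numClosedFieldType) (n : nat) (Y : finType) (q : Y -> Y -> C) m
  (lam : 'I_m.+1 -> C) k (b : 'I_m.+1 -> nat) (F : {ffun pfun n Y -> C}) :
  symmetric_stochastic_irreducible q -> eigen_enumeration q lam ->
  (k < n)%N -> [/\ type_size b = k, Pkb q lam k b F & Dop k F = 0] ->
  [/\ supp k F, Rprop k (#|Y|%:R * (k - type_len b)%:R) F, (k <= k)%N,
      (type_len b <= k)%N &
      Dop k.+1 (Dstar k.+1 F) = [ffun th => #|Y|%:R * ((n + type_len b)%:R - k%:R - k%:R)
         * (k - k + 1)%:R * F th]].
Proof.
move=> Hq He Hn [Hsz HP HD].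
have [HS HR] := pkb_props Hq He HP.
have Eb : b ord0 = (k - type_len b)%N by rewrite -Hsz type_split addnK.
have Hl : (type_len b <= k)%N by rewrite -Hsz type_split leq_addl.
rewrite -Eb; split => //.
rewrite (DDstar HS HR); apply/ffunP => phi; rewrite ffunE [RHS]ffunE.
have -> : Dstar k (Dop k F) phi = 0.
  rewrite ffunE; case: ifP => // _; apply: big1 => psi _; by rewrite HD ffun0_app.
rewrite Eb subnn add0n !natrB ?(ltnW Hn) // natrD; ring.
Qed.

Lemma main_ind (C : numClosedFieldType) (n : nat) (Y : finType) (q : Y -> Y -> C) m
  (lam : 'I_m.+1 -> C) k :
  symmetric_stochastic_irreducible q -> eigen_enumeration q lam ->
  forall h, (h < n)%N -> forall (b : 'I_m.+1 -> nat) (F : {ffun pfun n Y -> C}),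
  Phbk q lam k h b F ->
  [/\ supp h F, Rprop h (#|Y|%:R * (h - type_len b)%:R) F, (k <= h)%N,
      (type_len b <= k)%N &
      Dop h.+1 (Dstar h.+1 F) = [ffun th => #|Y|%:R * ((n + type_len b)%:R - k%:R - h%:R)
         * (h - k + 1)%:R * F th]].
Proof.
move=> Hq He; elim => [|h IH] Hn b F; rewrite Phbk_eq.
  case: (0 =P k) => [Ek|_ //]; subst k; exact: base_case.
case: (h.+1 =P k) => [Ek|Hne]; first by subst k; exact: base_case.
case=> Hkh Hsz Hl [G [HG ->]].
have [HSG HRG Hkh' Hl' HDG] := IH (ltnW Hn) _ _ HG.
rewrite type_len_prime in HRG HDG.
have Hlh : (type_len b <= h)%N := leq_trans Hl Hkh'.
have HR2 := Rprop_Dstar HRG.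
have Ec : #|Y|%:R * (h - type_len b)%:R + #|Y|%:R =
          #|Y|%:R * (h.+1 - type_len b)%:R :> C.
  by rewrite subSn // -addn1 natrD; ring.
rewrite Ec in HR2.
split; [exact: Dstar_supp | exact: HR2 | exact: ltnW Hkh | exact: Hl |].
rewrite (DDstar (@Dstar_supp _ _ _ h G) HR2) HDG Dstar_scale.
set D := Dstar h.+1 G.
have E1 : (n - h.+1)%:R = n%:R - h.+1%:R :> C := natrB _ (ltnW Hn).
have E2 : (h.+1 - type_len b)%:R = h.+1%:R - (type_len b)%:R :> C :=
  natrB _ (leq_trans Hl (ltnW Hkh)).
have E3 : (h.+1 - k + 1)%:R = h%:R - k%:R + 1 + 1 :> C.
  by rewrite subSn // -addn1 !natrD natrB.
have E4 : (h - k + 1)%:R = h%:R - k%:R + 1 :> C by rewrite natrD natrB.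
have E5 : h.+1%:R = h%:R + 1 :> C by rewrite -addn1 natrD.
apply/ffunP => phi; rewrite !ffunE.
set X := (if _ then _ else _).
rewrite E1 E2 E3 E4 !natrD E5; ring.
Qed.


Theorem proposition7p8 (C : numClosedFieldType) (n : nat) (Y : finType)
  (q : Y -> Y -> C) (m : nat) (lam : 'I_m.+1 -> C)
  (k h : nat) (a : 'I_m.+1 -> nat) (F : {ffun pfun n Y -> C}) :
  symmetric_stochastic_irreducible q ->
  eigen_enumeration q lam ->
  (k <= h)%N -> (h < n)%N ->
  type_size a = h.+1 -> (type_len a <= k)%N ->
  Phbk q lam k h (type_prime a) F ->
  Dop h.+1 (Dstar h.+1 F) =
  [ffun th => (#|Y|%:R * ((n + type_len a)%:R - k%:R - h%:R) * (h - k + 1)%:R) * F th].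
Proof.
move=> Hq He _ Hn _ _ HP.
have [_ _ _ _ ->] := main_ind Hq He Hn HP.
by rewrite type_len_prime.
Qed.
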